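(* Let $\Gamma$ be a finite monoid generating set of $V$, let $w = a_n \cdots a_1 \in \Gamma^+$ ($a_i \in \Gamma$), and let $x \in \{0,1\}^*$ be such that the computation $x = x_0 \mapsto x_1 \mapsto \cdots \mapsto x_n$ with $x_i = a_i(x_{i-1})$ ($1\le i\le n$) is defined (each $x_i$ is defined under the partial action on $\{0,1\}^*$). Then there exist $s, z_0, z_1, \ldots, z_n \in \{0,1\}^*$ such that: (1) $x_i = z_i s$ and $|z_i| \le |w|\cdot \mathrm{maxlen}(\Gamma)$ for $0 \le i \le n$; (2) $z_{i+1} = a_{i+1}(z_i)$ for $0 \le i \le n-1$ (in particular $z_n = w(z_0)$); (3) there exists $k \in \{0,1,\ldots,n\}$ with $|z_k| \le \mathrm{maxlen}(\Gamma)$. Moreover, $w(x) \ne x$ and $v(x)$ is defined for every suffix $v$ of $w$ if and only if $w(z_0) \neq z_0$ and $v(z_0)$ is defined for every suffix $v$ of $w$.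
   Context: Thompson group $V$: a prefix code is a set $P \subseteq \{0,1\}^*$ in which no element is a proper prefix of another; it is maximal if it is contained in no larger prefix code. Each bijection $\varphi: P\to Q$ between finite maximal prefix codes defines a homeomorphism of $\{0,1\}^\omega$ by $pt \mapsto \varphi(p)t$; $V$ is the group of all such homeomorphisms. Each $\varphi\in V$ has a unique such table with the fewest entries (the maximally extended one); its domain and image codes are denoted $\mathrm{domC}(\varphi)$ and $\mathrm{imC}(\varphi)$. The partial action of $\varphi$ on $\{0,1\}^*$ is $\varphi(pu) = \varphi(p)u$ for $p\in\mathrm{domC}(\varphi)$, $u\in\{0,1\}^*$, and $\varphi(x)$ is undefined if $x \notin \mathrm{domC}(\varphi)\{0,1\}^*$. $\mathrm{maxlen}(\varphi) = \max\{|z| : z \in \mathrm{domC}(\varphi)\cup\mathrm{imC}(\varphi)\}$ and $\mathrm{maxlen}(S) = \max_{\varphi\in S}\mathrm{maxlen}(\varphi)$ for finite $S\subseteq V$. A monoid generating set $\Gamma\subseteq V$ is regarded as a finite alphabet; for $w = a_n\cdots a_1 \in \Gamma^+$, $w(\cdot)$ denotes the element $a_n\circ\cdots\circ a_1$ of $V$ ($a_1$ applied first), and its partial action on $\{0,1\}^*$ is that of this element of $V$. *)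

(* Defs.v *)
From mathcomp Require Import all_boot.
Set Implicit Arguments. Unset Strict Implicit. Unset Printing Implicit Defensive.

Definition word := seq bool.
Definition stream := nat -> bool.

Definition is_prefix (p x : word) : Prop := exists u : word, x = p ++ u.

Definition prefix_code (P : word -> Prop) : Prop :=
  forall p q, P p -> P q -> is_prefix p q -> p = q.

Definition maximal_prefix_code (P : word -> Prop) : Prop :=
  prefix_code P /\
  forall P' : word -> Prop, prefix_code P' -> (forall x, P x -> P' x) ->
    forall x, P' x -> P x.

(* A table: a finite list of pairs (p, phi(p)). *)
Definition table := seq (word * word).

Definition domC (t : table) : seq word := map fst t.
Definition imC (t : table) : seq word := map snd t.

(* bijection between two finite maximal prefix codes *)
Definition valid_table (t : table) : Prop :=
  uniq (domC t) /\ uniq (imC t) /\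
  maximal_prefix_code (fun x => x \in domC t) /\
  maximal_prefix_code (fun x => x \in imC t).

Definition scat (p : word) (s : stream) : stream :=
  fun n => if n < size p then nth false p n else s (n - size p).

Definition spref (p : word) (s : stream) : bool :=
  all (fun i => nth false p i == s i) (iota 0 (size p)).

(* The homeomorphism of {0,1}^omega induced by a table: p t |-> phi(p) t *)
Definition tfun (t : table) (s : stream) : stream :=
  let pq := nth ([::], [::]) t (find (fun pq : word * word => spref pq.1 s) t) in
  scat pq.2 (fun n => s (n + size pq.1)).

Definition represents (t : table) (f : stream -> stream) : Prop :=
  valid_table t /\
  forall p q (u : stream), (p, q) \in t -> forall n, f (scat p u) n = scat q u n.

(* t is the table of f with the fewest entries (the maximally extended one) *)
Definition max_table (f : stream -> stream) (t : table) : Prop :=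
  represents t f /\ forall t', represents t' f -> size t <= size t'.

Definition pact (f : stream -> stream) (x y : word) : Prop :=
  exists t, max_table f t /\
    exists p q u, (p, q) \in t /\ x = p ++ u /\ y = q ++ u.

Definition maxlen (t : table) : nat :=
  \max_(pq <- t) maxn (size pq.1) (size pq.2).

Definition maxlenS (G : seq table) : nat := \max_(a <- G) maxlen a.

(* A word w = a_n ... a_1 over the alphabet Gamma is represented by the list
   [:: a_1; ...; a_n] in APPLICATION order (a_1 applied first).
   wfun ws is the element a_n o ... o a_1 of V. *)
Definition wfun (ws : seq table) : stream -> stream :=
  foldr (fun a f => f \o tfun a) id ws.

(* Main.v *)
Require Import Defs.
From mathcomp Require Import all_boot.
From mathcomp Require Import zify.
From Stdlib Require Import Classical FunctionalExtensionality.
Set Implicit Arguments. Unset Strict Implicit. Unset Printing Implicit Defensive.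

Definition pre (s : stream) (n : nat) : word := mkseq s n.
Definition sdrop (n : nat) (s : stream) : stream := fun k => s (k + n).
Definition spfx (p : word) (s : stream) : Prop := pre s (size p) = p.

Lemma scat_cat p q u : scat (p ++ q) u = scat p (scat q u).
Proof.
apply: functional_extensionality => n; rewrite /scat size_cat nth_cat.
case: (ltnP n (size p)) => H1; first by have -> : n < size p + size q by lia.
case: (ltnP (n - size p) (size q)) => H2.
  by have -> : n < size p + size q by lia.
have -> : n < size p + size q = false by lia.
by rewrite subnDA.
Qed.

Lemma scat_pre s n : scat (pre s n) (sdrop n s) = s.
Proof.
apply: functional_extensionality => k; rewrite /scat /pre /sdrop size_mkseq.
case: ltnP => H; first by rewrite nth_mkseq.
by rewrite subnK.
Qed.

Lemma pre_scat_le p u m : m <= size p -> pre (scat p u) m = take m p.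
Proof.
move=> Hm; apply: (@eq_from_nth _ false); rewrite /pre size_mkseq ?size_takel //.
move=> i Hi; rewrite nth_mkseq // nth_take // /scat.
by have -> : i < size p by lia.
Qed.

Lemma pre_scat p u : pre (scat p u) (size p) = p.
Proof. by rewrite pre_scat_le // take_size. Qed.

Lemma spfx_scat p u : spfx p (scat p u).
Proof. exact: pre_scat. Qed.

Lemma spfxE p s : spfx p s -> s = scat p (sdrop (size p) s).
Proof. by move=> H; rewrite -{1}(scat_pre s (size p)) H. Qed.

Lemma pre_take s m n : m <= n -> pre s m = take m (pre s n).
Proof.
move=> Hm; apply: (@eq_from_nth _ false); rewrite /pre size_mkseq ?size_takel ?size_mkseq //.
move=> i Hi; rewrite nth_mkseq // nth_take // nth_mkseq //; lia.
Qed.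

Lemma spfx_cmp p q s : spfx p s -> spfx q s -> is_prefix p q \/ is_prefix q p.
Proof.
move=> Hp Hq.
have gen : forall a b, spfx a s -> spfx b s -> size a <= size b -> is_prefix a b.
  move=> a b Ha Hb Hab; exists (drop (size a) b).
  by rewrite -{1}Ha (pre_take s Hab) Hb cat_take_drop.
case: (leqP (size p) (size q)) => H; first by left; apply: gen.
by right; apply: gen => //; lia.
Qed.

Lemma det_aux q e : size q < size e ->
  scat q (fun _ => true) = scat e (fun _ => true) ->
  scat q (fun _ => false) = scat e (fun _ => false) -> False.
Proof.
move=> H H1 H2.
have := f_equal (fun s => s (size q)) H1; have := f_equal (fun s => s (size q)) H2.
rewrite /scat ltnn H.
by move=> <-.
Qed.

Lemma det q e : (forall u : stream, scat q u = scat e u) -> q = e.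
Proof.
move=> H; case: (ltngtP (size q) (size e)) => Hs.
- by case: (det_aux Hs (H _) (H _)).
- by case: (det_aux Hs (esym (H _)) (esym (H _))).
- by rewrite -(pre_scat q (fun _ => true)) H Hs pre_scat.
Qed.

Lemma scat_injr p u v : scat p u = scat p v -> u = v.
Proof.
move=> H; apply: functional_extensionality => k.
have := f_equal (fun s => s (k + size p)) H; rewrite /scat.
have -> : k + size p < size p = false by lia.
by rewrite addnK.
Qed.

Lemma spfx_cat p w s : spfx (p ++ w) s -> spfx p s.
Proof. by move=> /spfxE ->; rewrite scat_cat; apply: spfx_scat. Qed.

Lemma spfx_word p d u : spfx p (scat d u) -> size p <= size d -> is_prefix p d.
Proof.
move=> H Hs; exists (drop (size p) d).
by rewrite -{1}H pre_scat_le // cat_take_drop.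
Qed.

Lemma prefix_eq p q : is_prefix p q -> size p = size q -> p = q.
Proof.
move=> [u ->]; rewrite size_cat => H.
have : size u = 0 by lia.
by move/size0nil => ->; rewrite cats0.
Qed.
Definition complete (l : seq word) := forall s, exists2 p, p \in l & spfx p s.

Lemma max_complete l : maximal_prefix_code (fun x => x \in l) -> complete l.
Proof.
move=> [Hpc Hmax] s; apply: NNPP => Hn.
pose N := (\max_(p <- l) size p).+1.
pose x := pre s N.
have Hxs : spfx x s by rewrite /spfx /x /pre size_mkseq.
have Hsz : size x = N by rewrite /x /pre size_mkseq.
have Hl : forall p, p \in l -> size p < N.
  by move=> p Hp; rewrite ltnS; apply: (@leq_bigmax_seq _ _ xpredT).
have Hx : x \in l.
  apply: (Hmax (fun z => z \in l \/ z = x)).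
  - move=> p q [Hp|->] [Hq|->] Hpq.
    + exact: Hpc.
    + by exfalso; apply: Hn; exists p => //; case: Hpq => u Hu;
        apply: (@spfx_cat p u); rewrite -Hu.
    + by exfalso; case: Hpq => u Hu; have := Hl _ Hq; rewrite Hu size_cat Hsz; lia.
    + by [].
  - by move=> z Hz; left.
  - by right.
by apply: Hn; exists x.
Qed.

Lemma complete_max l : prefix_code (fun x => x \in l) -> complete l ->
  maximal_prefix_code (fun x => x \in l).
Proof.
move=> Hpc Hc; split=> // P' HP' Hsub x Hx.
have [p Hp Hps] := Hc (scat x (fun _ => false)).
case: (spfx_cmp Hps (spfx_scat x (fun _ => false))) => H.
- by rewrite -(HP' p x (Hsub p Hp) Hx H).
- by rewrite (HP' x p Hx (Hsub p Hp) H).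
Qed.

Lemma mem_fst (t : table) p : p \in map fst t -> exists q, (p, q) \in t.
Proof. by move/mapP => [[a b] Hab /= ->]; exists b. Qed.

Lemma mem_snd (t : table) q : q \in map snd t -> exists p, (p, q) \in t.
Proof. by move/mapP => [[a b] Hab /= ->]; exists a. Qed.

Lemma pair_fst (t : table) p q1 q2 : uniq (map fst t) -> (p,q1) \in t -> (p,q2) \in t -> q1 = q2.
Proof.
elim: t => // [[a b] t IH] /= /andP [Ha Hu].
rewrite !in_cons => /orP [/eqP [E1 E2]|H1] /orP [/eqP [E3 E4]|H2].
- by rewrite E2 E4.
- by move: Ha; rewrite -E1 (map_f fst H2).
- by move: Ha; rewrite -E3 (map_f fst H1).
- exact: IH.
Qed.

Lemma pair_snd (t : table) p1 p2 q : uniq (map snd t) -> (p1,q) \in t -> (p2,q) \in t -> p1 = p2.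
Proof.
elim: t => // [[a b] t IH] /= /andP [Ha Hu].
rewrite !in_cons => /orP [/eqP [E1 E2]|H1] /orP [/eqP [E3 E4]|H2].
- by rewrite E1 E3.
- by move: Ha; rewrite -E2 (map_f snd H2).
- by move: Ha; rewrite -E4 (map_f snd H1).
- exact: IH.
Qed.

Section Repr.
Variables (t : table) (f : stream -> stream).
Hypothesis Hr : represents t f.

Lemma repr_eq p q : (p,q) \in t -> forall u, f (scat p u) = scat q u.
Proof. by move=> H u; apply: functional_extensionality; apply: Hr.2. Qed.

Lemma repr_cover s : exists p q, (p,q) \in t /\ spfx p s.
Proof.
have [p Hp Hs] := max_complete Hr.1.2.2.1 s.
by have [q Hq] := mem_fst Hp; exists p, q.
Qed.

Lemma repr_covim s : exists p q, (p,q) \in t /\ spfx q s.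
Proof.
have [q Hq Hs] := max_complete Hr.1.2.2.2 s.
by have [p Hp] := mem_snd Hq; exists p, q.
Qed.

Lemma repr_inj : injective f.
Proof.
move=> s1 s2 Hf.
have [p1 [q1 [H1 /spfxE E1]]] := repr_cover s1.
have [p2 [q2 [H2 /spfxE E2]]] := repr_cover s2.
move: Hf; rewrite E1 E2 !(repr_eq H1) (repr_eq H2) => Hf.
have Hq : q1 = q2.
  have S2 : spfx q2 (scat q1 (sdrop (size p1) s1)) by rewrite Hf; apply: spfx_scat.
  case: (spfx_cmp (spfx_scat q1 (sdrop (size p1) s1)) S2) => Hp.
  - apply: Hr.1.2.2.2.1 => //; exact: (map_f snd H1) || exact: (map_f snd H2).
  - apply: esym; apply: Hr.1.2.2.2.1 => //; exact: (map_f snd H1) || exact: (map_f snd H2).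
move: H2 Hf; rewrite -Hq => H2.
rewrite -(pair_snd Hr.1.2.1 H1 H2) => /scat_injr ->.
by [].
Qed.

Lemma repr_surj s : exists r, f r = s.
Proof.
have [p [q [H /spfxE E]]] := repr_covim s.
by exists (scat p (sdrop (size q) s)); rewrite (repr_eq H) -E.
Qed.
End Repr.
Lemma list_choice (D : seq word) (R : word -> word -> Prop) :
  (forall d, d \in D -> exists e, R d e) ->
  exists t : table, map fst t = D /\ forall p q, (p,q) \in t -> R p q.
Proof.
elim: D => [|d D IH] H; first by exists [::].
have [e He] := H d (mem_head _ _).
have [t [Ht1 Ht2]] : exists t : table, map fst t = D /\ forall p q, (p,q) \in t -> R p q.
  by apply: IH => d' Hd'; apply: H; rewrite in_cons Hd' orbT.
exists ((d,e) :: t); split; first by rewrite /= Ht1.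
move=> p q; rewrite in_cons => /orP [/eqP [-> ->] //|]; exact: Ht2.
Qed.

Lemma uniq_snd (t : table) : uniq (map fst t) ->
  (forall p1 q1 p2 q2, (p1,q1) \in t -> (p2,q2) \in t -> q1 = q2 -> p1 = p2) ->
  uniq (map snd t).
Proof.
elim: t => // [[a b] t IH] /= /andP [Ha Hu] H; apply/andP; split.
- apply/negP => /mem_snd [p Hp].
  have Hp' : (p, b) \in (a, b) :: t by rewrite in_cons Hp orbT.
  have E := H a b p b (mem_head _ _) Hp' erefl.
  by move: Ha; rewrite E (map_f fst Hp).
- by apply: IH => // p1 q1 p2 q2 H1 H2; apply: H; rewrite in_cons ?H1 ?H2 orbT.
Qed.

Fixpoint allw (n : nat) : seq word :=
  if n is n'.+1 then map (cons false) (allw n') ++ map (cons true) (allw n')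
  else [:: [::]].

Lemma mem_cons_map (c b : bool) w (l : seq word) :
  (b :: w \in map (cons c) l) = (b == c) && (w \in l).
Proof.
apply/mapP/andP => [[y Hy [-> ->]]|[/eqP -> Hw]]; first by split.
by exists w.
Qed.

Lemma mem_allw n w : (w \in allw n) = (size w == n).
Proof.
elim: n w => [|n IH] [|b w] //=.
  by rewrite mem_cat; apply/negbTE/negP => /orP [] /mapP [y _] //.
rewrite mem_cat !mem_cons_map IH eqSS; case: (size w == n); by rewrite ?andbF ?andbT ?orbF; case: b.
Qed.
Lemma scat_eq_len p1 p2 u v : size p1 = size p2 -> scat p1 u = scat p2 v -> p1 = p2.
Proof. by move=> Hs H; rewrite -(pre_scat p1 u) H Hs pre_scat. Qed.

Lemma build (f : stream -> stream) N :
  injective f -> (forall s, exists r, f r = s) ->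
  (forall d, size d = N -> exists e, forall u, f (scat d u) = scat e u) ->
  exists t, represents t f.
Proof.
move=> Hinj Hsurj Hd.
have [t [Ht1 Ht2]] := @list_choice (undup (allw N))
   (fun d e => forall u, f (scat d u) = scat e u)
   (fun d H => Hd d (eqP (etrans (esym (mem_allw _ _)) (etrans (esym (mem_undup _ _)) H)))).
have HD : forall p, p \in map fst t -> size p = N.
  by move=> p; rewrite Ht1 mem_undup mem_allw => /eqP.
have HDq : forall p q, (p,q) \in t -> size p = N.
  by move=> p q H; apply: HD; apply: (map_f fst H).
have HinD : forall p, size p = N -> exists q, (p,q) \in t.
  by move=> p Hp; apply: mem_fst; rewrite Ht1 mem_undup mem_allw Hp.
exists t; split; last by move=> p q u H n; rewrite (Ht2 p q H u).
have Hu1 : uniq (domC t) by rewrite /domC Ht1 undup_uniq.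
split=> //; split.
  apply: uniq_snd; first by rewrite Ht1 undup_uniq.
  move=> p1 q1 p2 q2 H1 H2 E.
  have := Ht2 _ _ H2 (fun _ => false); rewrite -E -(Ht2 _ _ H1) => /Hinj.
  by move/esym/scat_eq_len; apply; rewrite (HDq _ _ H1) (HDq _ _ H2).
split; apply: complete_max.
- move=> p q Hp Hq Hpq; apply: prefix_eq => //.
  by rewrite (HD _ Hp) (HD _ Hq).
- move=> s; exists (pre s N); last by rewrite /spfx /pre size_mkseq.
  by rewrite /domC Ht1 mem_undup mem_allw /pre size_mkseq.
- move=> q1 q2 /mem_snd [p1 H1] /mem_snd [p2 H2] [w Hw].
  have Ep : p2 = p1.
    have := Ht2 _ _ H2 (fun _ => false); rewrite Hw scat_cat -(Ht2 _ _ H1) => /Hinj.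
    by apply: scat_eq_len; rewrite (HDq _ _ H1) (HDq _ _ H2).
  move: H2; rewrite Ep => H2.
  by apply: det => u; rewrite -(Ht2 _ _ H1) -(Ht2 _ _ H2).
- move=> s; have [r Hr] := Hsurj s.
  have [q Hq] := HinD (pre r N) (size_mkseq _ _).
  exists q; first exact: (map_f snd Hq).
  rewrite -Hr -(scat_pre r N) (Ht2 _ _ Hq); exact: spfx_scat.
Qed.

Definition mxd (t : table) := \max_(pq <- t) size pq.1.

Lemma size_mxd (t : table) (p q : word) : (p,q) \in t -> size p <= mxd t.
Proof.
by move=> H; apply: (@leq_bigmax_seq _ _ xpredT (fun pq : word * word => size pq.1) (p,q)).
Qed.

Lemma cover_word t f d : represents t f -> mxd t <= size d ->
  exists p q w : word, (p,q) \in t /\ d = p ++ w.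
Proof.
move=> Hr Hd; have [p [q [H Hs]]] := repr_cover Hr (scat d (fun _ => false)).
have Hp : size p <= mxd t.
  by apply: (@leq_bigmax_seq _ _ xpredT (fun pq : word * word => size pq.1) (p,q)).
have [w Hw] := spfx_word Hs (leq_trans Hp Hd).
by exists p, q, w.
Qed.

Lemma comp t1 t2 f1 f2 : represents t1 f1 -> represents t2 f2 ->
  exists t, represents t (fun s => f2 (f1 s)).
Proof.
move=> H1 H2; apply: (@build _ (mxd t1 + mxd t2)).
- by move=> a b /(repr_inj H2) /(repr_inj H1).
- move=> s; have [r Hr] := repr_surj H2 s; have [r' Hr'] := repr_surj H1 r.
  by exists r'; rewrite Hr' Hr.
- move=> d Hd.
  have Hd1 : mxd t1 <= size d by lia.
  have [p [q [w [Hpq Ed]]]] := cover_word H1 Hd1.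
  have Hp := size_mxd Hpq.
  have Hd2 : mxd t2 <= size (q ++ w).
    by move: Hd; rewrite Ed !size_cat; lia.
  have [p2 [q2 [w2 [Hpq2 E2]]]] := cover_word H2 Hd2.
  exists (q2 ++ w2) => u.
  by rewrite Ed scat_cat (repr_eq H1 Hpq) -scat_cat E2 scat_cat (repr_eq H2 Hpq2) scat_cat.
Qed.
Lemma wfun_repr (ws : seq table) :
  (forall a, a \in ws -> represents a (tfun a)) -> exists t, represents t (wfun ws).
Proof.
elim: ws => [|a ws IH] H.
  exists [:: ([::], [::])]; split; last by move=> p q u; rewrite mem_seq1 => /eqP [-> ->].
  split=> //; split=> //.
  have Hm : maximal_prefix_code (fun x : word => x \in [:: [::]]).
    apply: complete_max.
    - by move=> p q; rewrite !mem_seq1 => /eqP -> /eqP ->.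
    - by move=> s; exists [::]; rewrite ?mem_seq1.
  by split.
have [t Ht] : exists t, represents t (wfun ws).
  by apply: IH => b Hb; apply: H; rewrite in_cons Hb orbT.
exact: (comp (H a (mem_head _ _)) Ht).
Qed.

Lemma ex_max t f : represents t f -> exists t, max_table f t.
Proof.
move=> Ht.
suff: forall n t, represents t f -> size t <= n -> exists t, max_table f t.
  by move/(_ (size t) t Ht (leqnn _)).
elim=> [|n IH] t' Ht' Hs.
  by exists t'; split=> // t'' _; move: Hs; rewrite leqn0 => /eqP ->.
case: (classic (exists t'', represents t'' f /\ size t'' < size t')) =>
  [[t'' [H1 H2]]|Hn].
  apply: (IH t'') => //; lia.
exists t'; split=> // t'' H; rewrite leqNgt; apply/negP => H2.
by apply: Hn; exists t''.
Qed.

Lemma prefbP (x p : word) : reflect (is_prefix x p) (take (size x) p == x).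
Proof.
apply: (iffP eqP) => [H|[u ->]]; last by rewrite take_size_cat.
by exists (drop (size x) p); rewrite -{1}H cat_take_drop.
Qed.

Lemma nth_pref (x v : word) b : nth false (x ++ b :: v) (size x) = b.
Proof. by rewrite nth_cat ltnn subnn. Qed.

Lemma merge f t (x y : word) : max_table f t -> (forall u, f (scat x u) = scat y u) ->
  exists p q w : word, (p,q) \in t /\ x = p ++ w /\ y = q ++ w.
Proof.
move=> [Hr Hmin] Hx.
case: (classic (exists p q w : word, (p,q) \in t /\ x = p ++ w)) => [[p [q [w [H E]]]]|NP].
  exists p, q, w; split=> //; split=> //.
  by apply: det => u; rewrite -Hx E !scat_cat (repr_eq Hr H).
exfalso.
have NP' : forall p q : word, (p,q) \in t -> ~ is_prefix p x.
  by move=> p q H [w E]; apply: NP; exists p, q, w.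
pose P := fun pq : word * word => take (size x) pq.1 == x.
have R' : forall p q : word, (p,q) \in t -> is_prefix x p -> is_prefix y q.
  move=> p q H [v E]; exists v; apply: det => u.
  by rewrite -(repr_eq Hr H) E !scat_cat Hx.
have R : forall p q : word, (p,q) \in t -> is_prefix y q -> is_prefix x p.
  move=> p q H [w E].
  have : f (scat p (fun _ => false)) = f (scat x (scat w (fun _ => false))).
    by rewrite (repr_eq Hr H) E scat_cat Hx.
  move/(repr_inj Hr) => Es.
  have Hs : spfx x (scat p (fun _ => false)) by rewrite Es; apply: spfx_scat.
  case: (spfx_cmp Hs (spfx_scat p _)) => // Hpx.
  by case: (NP' _ _ H Hpx).
have Two : forall b, exists p q : word, (p,q) \in t /\ is_prefix (x ++ [:: b]) p.
  move=> b; have [p [q [H Hs]]] := repr_cover Hr (scat (x ++ [:: b]) (fun _ => false)).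
  exists p, q; split=> //.
  case: (spfx_cmp Hs (spfx_scat _ _)) => [[u Eu]|]; last done.
  case/lastP: u Eu => [|u c] Eu.
    by move: Eu; rewrite cats0 => <-; exists [::]; rewrite cats0.
  move: Eu; rewrite cats1 -rcons_cat => /rcons_inj [Ex _].
  by case: (NP' _ _ H); exists u.
have [pf [qf [Hf [vf Ef]]]] := Two false.
have [pt [qt [Ht [vt Et]]]] := Two true.
have Pf : P (pf, qf) by apply/prefbP; exists ([:: false] ++ vf); rewrite Ef catA.
have Pt : P (pt, qt) by apply/prefbP; exists ([:: true] ++ vt); rewrite Et catA.
have Hneq : (pf, qf) != (pt, qt).
  apply/negP => /eqP [E1 _].
  have := nth_pref x vf false; rewrite -cat1s catA -Ef E1 Et -catA cat1s nth_pref.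
  by [].
have Hcnt : 2 <= count P t.
  rewrite -size_filter.
  apply: (@uniq_leq_size _ [:: (pf,qf); (pt,qt)]).
    by rewrite /= andbT in_cons negb_or Hneq.
  move=> z; rewrite !in_cons in_nil orbF => /orP [/eqP ->|/eqP ->];
    by rewrite mem_filter ?Pf ?Pt.
pose F := filter (predC P) t.
pose t' := (x, y) :: F.
have HF : forall p q : word, (p,q) \in F = ((p,q) \in t) && ~~ P (p,q).
  by move=> p q; rewrite mem_filter andbC.
have Hsz : size t' < size t.
  have := count_predC P t; rewrite /t' /= /F size_filter; lia.
suff Hr' : represents t' f by have := Hmin _ Hr'; lia.
have Hsub1 : forall z, z \in map fst F -> z \in map fst t.
  by apply: mem_subseq; apply: map_subseq; apply: filter_subseq.
have Hsub2 : forall z, z \in map snd F -> z \in map snd t.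
  by apply: mem_subseq; apply: map_subseq; apply: filter_subseq.
have Fmem1 : forall p, p \in map fst F -> exists q, (p,q) \in t /\ ~ is_prefix x p.
  move=> p /mem_fst [q]; rewrite HF => /andP [H1 H2]; exists q; split=> //.
  by move/prefbP => H3; move: H2; rewrite /P /= H3.
have Fmem2 : forall q, q \in map snd F -> exists p, (p,q) \in t /\ ~ is_prefix x p.
  move=> q /mem_snd [p]; rewrite HF => /andP [H1 H2]; exists p; split=> //.
  by move/prefbP => H3; move: H2; rewrite /P /= H3.
have inF : forall p q : word, (p,q) \in t -> ~ is_prefix x p -> (p,q) \in F.
  by move=> p q H1 H2; rewrite HF H1 /P /=; apply/negP => /prefbP.
split; last first.
  move=> p q u; rewrite in_cons => /orP [/eqP [-> ->] n|].
    by rewrite Hx.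
  by rewrite /F mem_filter => /andP [_ H] n; apply: Hr.2.
split.
  rewrite /domC /= ; apply/andP; split.
    apply/negP => /Fmem1 [q [_ H]]; apply: H; exists [::]; by rewrite cats0.
  apply: (subseq_uniq (map_subseq _ (filter_subseq _ _))); exact: Hr.1.1.
split.
  rewrite /imC /= ; apply/andP; split.
    apply/negP => /Fmem2 [p [H1 H2]]; apply: H2; apply: (R _ _ H1).
    by exists [::]; rewrite cats0.
  apply: (subseq_uniq (map_subseq _ (filter_subseq _ _))); exact: Hr.1.2.1.
split; apply: complete_max.
- move=> p q; rewrite /domC /= !in_cons => /orP [/eqP ->|Hp] /orP [/eqP ->|Hq] //.
  + by move=> H; case: (Fmem1 _ Hq) => ? [].
  + by move: (Fmem1 _ Hp) => [q' [H1 _]] H; case: (NP' _ _ H1 H).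
  + by apply: Hr.1.2.2.1.1; apply: Hsub1.
- move=> s; have [p [q [H Hs]]] := repr_cover Hr s.
  case: (classic (is_prefix x p)) => [[v E]|Hn].
    by exists x; [exact: mem_head | apply: (@spfx_cat x v); rewrite -E].
  exists p => //; rewrite /domC /= in_cons; apply/orP; right.
  exact: (map_f fst (inF _ _ H Hn)).
- move=> p q; rewrite /imC /= !in_cons => /orP [/eqP ->|Hp] /orP [/eqP ->|Hq] //.
  + by move=> H; case: (Fmem2 _ Hq) => p' [H1 H2]; exfalso; apply: H2; apply: (R _ _ H1).
  + move=> [w Ew].
    move: (Fmem2 _ Hp) => [p' [H1 H2]].
    have Hxpf : is_prefix x pf by exists ([:: false] ++ vf); rewrite Ef catA.
    have [w' Ew'] := R' _ _ Hf Hxpf.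
    have Eq : p = qf.
      apply: Hr.1.2.2.2.1; [exact: (map_f snd H1) | exact: (map_f snd Hf) |].
      by exists (w ++ w'); rewrite Ew' Ew catA.
    move: H1; rewrite Eq => H1.
    have := pair_snd Hr.1.2.1 H1 Hf; move=> Ep; exfalso; apply: H2; rewrite Ep.
    by exists ([:: false] ++ vf); rewrite Ef catA.
  + by apply: Hr.1.2.2.2.1; apply: Hsub2.
- move=> s; have [p [q [H Hs]]] := repr_covim Hr s.
  case: (classic (is_prefix x p)) => [Hxp|Hn].
    have [v E] := R' _ _ H Hxp.
    by exists y; [exact: mem_head | apply: (@spfx_cat y v); rewrite -E].
  exists q => //; rewrite /imC /= in_cons; apply/orP; right.
  exact: (map_f snd (inF _ _ H Hn)).
Qed.
Lemma catr_inj (a b s : word) : a ++ s = b ++ s -> a = b.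
Proof.
move=> H; have Hs : size a = size b by have := f_equal size H; rewrite !size_cat; lia.
by rewrite -(take_size_cat s (erefl (size a))) H take_size_cat.
Qed.

Lemma pact_ext f (z y s : word) : pact f z y -> pact f (z ++ s) (y ++ s).
Proof.
move=> [t [Ht [p [q [u [H [E1 E2]]]]]]].
exists t; split=> //; exists p, q, (u ++ s); split=> //.
by rewrite E1 E2 !catA.
Qed.

Lemma pact_det f (z z' s y : word) : (forall u, f (scat z u) = scat z' u) ->
  pact f (z ++ s) y -> y = z' ++ s.
Proof.
move=> Hc [t [[Hr _] [p [q [u [H [E1 E2]]]]]]].
apply: det => u0.
by rewrite E2 !scat_cat -(repr_eq Hr H) -scat_cat -E1 scat_cat Hc.
Qed.

Lemma pact_det0 f (z z' y : word) : (forall u, f (scat z u) = scat z' u) ->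
  pact f z y -> y = z'.
Proof.
move=> Hc H; rewrite -(cats0 z) in H.
by rewrite (pact_det Hc H) cats0.
Qed.

Lemma pact_ex f (z z' s : word) : (forall u, f (scat z u) = scat z' u) ->
  (exists y, pact f (z ++ s) y) -> pact f z z'.
Proof.
move=> Hc [y [t [Ht _]]].
have [p [q [w [H [E1 E2]]]]] := merge Ht Hc.
by exists t; split=> //; exists p, q, w.
Qed.

Lemma pact_of f (z z' : word) : (exists t, represents t f) ->
  (forall u, f (scat z u) = scat z' u) -> pact f z z'.
Proof.
move=> [t0 Ht0] Hc; have [t Ht] := ex_max Ht0.
have [p [q [w [H [E1 E2]]]]] := merge Ht Hc.
by exists t; split=> //; exists p, q, w.
Qed.

Lemma wfun_rcons (l : seq table) a s : wfun (rcons l a) s = tfun a (wfun l s).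
Proof. by elim: l s => [|b l IH] s //=; rewrite -IH. Qed.

Lemma fchoice (T : Type) (x0 : T) n (R : nat -> T -> Prop) :
  (forall i, i < n -> exists y, R i y) -> exists g : nat -> T, forall i, i < n -> R i (g i).
Proof.
elim: n => [|n IH] H; first by exists (fun _ => x0).
have [g Hg] : exists g : nat -> T, forall i, i < n -> R i (g i).
  by apply: IH => i Hi; apply: H; lia.
have [y Hy] := H n (ltnSn n).
exists (fun i => if i == n then y else g i) => i Hi.
case: eqP => [->//|Hne]; apply: Hg; lia.
Qed.

Lemma argmin n (g : nat -> nat) : 0 < n -> exists k, k < n /\ forall i, i < n -> g k <= g i.
Proof.
elim: n => [//|n IH] _.
case: n IH => [|n] IH; first by exists 0; split=> // i; rewrite ltnS leqn0 => /eqP ->.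
have [k [Hk Hmin]] := IH (ltn0Sn _).
case: (leqP (g k) (g n.+1)) => H.
  exists k; split; first lia.
  move=> i Hi; case: (ltnP i n.+1) => Hi'; first exact: Hmin.
  have -> : i = n.+1 by lia.
  by [].
exists n.+1; split=> // i Hi; case: (ltnP i n.+1) => Hi'.
  by have := Hmin i Hi'; lia.
by have -> : i = n.+1 by lia.
Qed.

Lemma bound (g : nat -> nat) n M k : k < n -> g k <= M -> g k.+1 <= M ->
  (forall i, i < n -> g i.+1 <= g i + M /\ g i <= g i.+1 + M) ->
  forall i, i <= n -> g i <= n * M.
Proof.
move=> Hk H1 H2 Hs.
have A : forall j, j <= k -> g (k - j) <= j.+1 * M.
  elim=> [|j IH] Hj; first by rewrite subn0 mul1n.
  have E : (k - j.+1).+1 = k - j by lia.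
  have Hlt : k - j.+1 < n by lia.
  have [_ Hb] := Hs (k - j.+1) Hlt.
  rewrite E in Hb; have := IH (ltnW Hj); rewrite mulSn; lia.
have B : forall j, k.+1 + j <= n -> g (k.+1 + j) <= j.+1 * M.
  elim=> [|j IH] Hj; first by rewrite addn0 mul1n.
  have Hlt : k.+1 + j < n by lia.
  have Hle : k.+1 + j <= n by lia.
  have [Ha _] := Hs (k.+1 + j) Hlt.
  rewrite addnS; have := IH Hle.
  rewrite mulSn; lia.
move=> i Hi; case: (leqP i k) => Hik.
  have := A (k - i) (leq_subr _ _); rewrite subKn //.
  move=> H; apply: (leq_trans H); apply: leq_mul => //; lia.
have Hle : k.+1 + (i - k.+1) <= n by lia.
have := B (i - k.+1) Hle.
have -> : k.+1 + (i - k.+1) = i by lia.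
move=> H; apply: (leq_trans H); apply: leq_mul => //; lia.
Qed.

Lemma maxlen_pair (a : table) (d e : word) : (d,e) \in a -> size d <= maxlen a /\ size e <= maxlen a.
Proof.
move=> H.
have := @leq_bigmax_seq _ a xpredT (fun pq : word * word => maxn (size pq.1) (size pq.2)) (d,e) H erefl.
rewrite /maxlen /= => Hm; split; apply: leq_trans Hm; [exact: leq_maxl | exact: leq_maxr].
Qed.

Lemma maxlen_G (G : seq table) a : a \in G -> maxlen a <= maxlenS G.
Proof. by move=> H; apply: (@leq_bigmax_seq _ G xpredT maxlen a H erefl). Qed.

Lemma step (a : table) (x y : word) : max_table (tfun a) a -> pact (tfun a) x y ->
  exists d e u : word, (d,e) \in a /\ x = d ++ u /\ y = e ++ u.
Proof.
move=> Ha [t [Ht [p [q [u [H [E1 E2]]]]]]].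
have [d [e [w [Hde [F1 F2]]]]] := merge Ha (repr_eq Ht.1 H).
by exists d, e, (w ++ u); split=> //; rewrite E1 E2 F1 F2 !catA.
Qed.

Lemma suf_cat (a b : word) L : L <= size b ->
  drop (size (a ++ b) - L) (a ++ b) = drop (size b - L) b.
Proof.
move=> H; rewrite drop_cat size_cat.
have -> : size a + size b - L < size a = false by lia.
by congr drop; lia.
Qed.

Lemma take_suf (a b : word) L : L <= size b ->
  take (size (a ++ b) - L) (a ++ b) = a ++ take (size b - L) b.
Proof.
move=> H; rewrite take_cat size_cat.
have -> : size a + size b - L < size a = false by lia.
by congr (_ ++ take _ _); lia.
Qed.
Theorem lemma3p1
  (G : seq table)
  (* each generator is given by its maximally extended table *)
  (HG : forall a, a \in G -> max_table (tfun a) a)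
  (* G is a monoid generating set of V *)
  (Hgen : forall t, valid_table t ->
     exists ws : seq table, all (fun a => a \in G) ws /\
       forall s n, wfun ws s n = tfun t s n)
  (ws : seq table) (* w = a_n ... a_1, ws = [:: a_1; ...; a_n] *)
  (Hne : 0 < size ws)
  (HwG : all (fun a => a \in G) ws)
  (x : word) (xs : seq word)
  (Hxs : size xs = (size ws).+1)
  (Hx0 : nth [::] xs 0 = x)
  (Hcomp : forall i, i < size ws ->
     pact (tfun (nth [::] ws i)) (nth [::] xs i) (nth [::] xs i.+1)) :
  exists (s : word) (zs : seq word),
    size zs = (size ws).+1 /\
    (forall i, i <= size ws ->
       nth [::] xs i = nth [::] zs i ++ s /\
       size (nth [::] zs i) <= size ws * maxlenS G) /\
    (forall i, i < size ws ->
       pact (tfun (nth [::] ws i)) (nth [::] zs i) (nth [::] zs i.+1)) /\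
    pact (wfun ws) (nth [::] zs 0) (nth [::] zs (size ws)) /\
    (exists k, k <= size ws /\ size (nth [::] zs k) <= maxlenS G) /\
    (((exists y, pact (wfun ws) x y /\ y <> x) /\
      (forall j, j < size ws -> exists y, pact (wfun (take j.+1 ws)) x y))
     <->
     ((exists y, pact (wfun ws) (nth [::] zs 0) y /\ y <> nth [::] zs 0) /\
      (forall j, j < size ws ->
         exists y, pact (wfun (take j.+1 ws)) (nth [::] zs 0) y))).
Proof.
set n := size ws; set M := maxlenS G.
pose X i := nth [::] xs i; pose A i := nth [::] ws i.
have HA : forall i, i < n -> A i \in G.
  by move=> i Hi; apply: (allP HwG); apply: mem_nth.
have Hrep : forall a, a \in ws -> represents a (tfun a).
  by move=> a Ha; exact: (HG a (allP HwG a Ha)).1.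
have [g Hg] := @fchoice (word * word * word) ([::], [::], [::]) n
  (fun i deu => (deu.1.1, deu.1.2) \in A i /\ X i = deu.1.1 ++ deu.2 /\ X i.+1 = deu.1.2 ++ deu.2)
  (fun i Hi => let: ex_intro d (ex_intro e (ex_intro u H)) := step (HG _ (HA i Hi)) (Hcomp i Hi)
               in ex_intro _ (d, e, u) H).
pose d i := (g i).1.1; pose e i := (g i).1.2; pose u i := (g i).2.
have Hde : forall i, i < n -> (d i, e i) \in A i by move=> i /Hg [].
have Hd : forall i, i < n -> X i = d i ++ u i by move=> i /Hg [_ [H _]]; exact: H.
have He : forall i, i < n -> X i.+1 = e i ++ u i by move=> i /Hg [_ [_ H]]; exact: H.
have [k [Hk Hmin]] := argmin (fun i => size (u i)) Hne.
pose L := size (u k).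
pose s := u k.
pose suf (a : word) := drop (size a - L) a.
have Hsuf0 : forall i, i < n -> suf (u i) = suf (u 0).
  elim=> [//|i IH] Hi.
  rewrite -IH; last lia.
  have E : e i ++ u i = d i.+1 ++ u i.+1 by rewrite -He ?Hd //; lia.
  rewrite /suf -(suf_cat (e i) (Hmin i _)); last lia.
  by rewrite E suf_cat //; apply: Hmin.
have Hs : s = suf (u 0) by rewrite -(Hsuf0 k Hk) /suf /s subnn drop0.
have HsufX : forall i, i <= n -> suf (X i) = s /\ L <= size (X i).
  move=> i Hi; case: (ltnP i n) => Hin.
    rewrite Hd // /suf suf_cat ?Hmin //; split; first by rewrite -/(suf _) Hsuf0.
    by rewrite size_cat; have := Hmin i Hin; lia.
  have Ei : i = (n.-1).+1 by lia.
  have Hn1 : n.-1 < n by lia.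
  rewrite Ei He // /suf suf_cat ?Hmin //; split; first by rewrite -/(suf _) Hsuf0.
  by rewrite size_cat; have := Hmin _ Hn1; lia.
pose Z i := take (size (X i) - L) (X i).
have HZX : forall i, i <= n -> X i = Z i ++ s.
  move=> i Hi; have [H1 _] := HsufX i Hi.
  by rewrite -H1 /Z /suf cat_take_drop.
pose v i := take (size (u i) - L) (u i).
have HZd : forall i, i < n -> Z i = d i ++ v i.
  by move=> i Hi; rewrite /Z Hd // take_suf //; apply: Hmin.
have HZe : forall i, i < n -> Z i.+1 = e i ++ v i.
  by move=> i Hi; rewrite /Z He // take_suf //; apply: Hmin.
have Hvk : v k = [::] by rewrite /v subnn take0.
have HdM : forall i, i < n -> size (d i) <= M /\ size (e i) <= M.
  move=> i Hi; have [H1 H2] := maxlen_pair (Hde i Hi).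
  have H3 := maxlen_G (HA i Hi); split; lia.
have Hstep : forall i, i < n -> forall w, tfun (A i) (scat (Z i) w) = scat (Z i.+1) w.
  move=> i Hi w; rewrite HZd // HZe // !scat_cat.
  by rewrite (repr_eq (HG _ (HA i Hi)).1 (Hde i Hi)).
have Hchain : forall j, j <= n -> forall w, wfun (take j ws) (scat (Z 0) w) = scat (Z j) w.
  elim=> [|j IH] Hj w; first by rewrite take0.
  rewrite (take_nth [::]) // wfun_rcons IH; last lia.
  exact: Hstep.
have Hchainj : forall j, j < n -> forall w,
    wfun (take j.+1 ws) (scat (Z 0) w) = scat (Z j.+1) w.
  by move=> j Hj; apply: Hchain.
have Hchainf : forall w, wfun ws (scat (Z 0) w) = scat (Z n) w.
  by move=> w; rewrite -(Hchain n (leqnn n)) take_size.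
have HX0 : x = Z 0 ++ s by rewrite -Hx0 -/(X 0) HZX.
exists s, (mkseq Z n.+1).
have Hnth : forall i, i <= n -> nth [::] (mkseq Z n.+1) i = Z i.
  by move=> i Hi; rewrite nth_mkseq.
rewrite !Hnth //.
split; first by rewrite size_mkseq.
split.
  move=> i Hi; rewrite Hnth //; split; first exact: HZX.
  have B1 : size (Z k) <= M by rewrite HZd // Hvk cats0; case: (HdM k Hk).
  have B2 : size (Z k.+1) <= M by rewrite HZe // Hvk cats0; case: (HdM k Hk).
  have B3 : forall i', i' < n -> size (Z i'.+1) <= size (Z i') + M /\ size (Z i') <= size (Z i'.+1) + M.
    move=> i' Hi'; rewrite HZe // (HZd i') // !size_cat; have := HdM i' Hi'; lia.
  exact: (@bound (fun i => size (Z i)) n M k Hk B1 B2 B3 i Hi).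
split.
  move=> i Hi; rewrite !Hnth //; last lia.
  exists (A i); split; first exact: HG (HA i Hi).
  by exists (d i), (e i), (v i); split; [exact: Hde | split; [exact: HZd | exact: HZe]].
split.
  apply: pact_of => //; apply: wfun_repr => a Ha; exact: Hrep.
split.
  exists k; split; first lia.
  by rewrite Hnth ?HZd // ?Hvk ?cats0; [case: (HdM k Hk) | lia].
rewrite HX0; split.
- move=> [[y [Hy Hyx]] Hj]; split.
    exists (Z n); split.
      by apply: (pact_ex (s := s)) => //; exists y.
    move=> E; apply: Hyx; rewrite (pact_det Hchainf Hy) E //.
  move=> j Hj'; exists (Z j.+1); apply: (pact_ex (s := s)); first exact: Hchainj.
  exact: Hj.
- move=> [[y [Hy Hyx]] Hj]; split.
    exists (Z n ++ s); split; first by rewrite -(pact_det0 Hchainf Hy); exact: pact_ext.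
    move/catr_inj => E; apply: Hyx; rewrite (pact_det0 Hchainf Hy) //.
  move=> j Hj'; have [y' Hy'] := Hj j Hj'; exists (y' ++ s); exact: pact_ext.
Qed.
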